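(* Let $p\ge2$ and consider the weighted acyclic directed graph described in the context, with sources $A_k$ and sinks $B_k$. For every $m\in\{0,\ldots,p-1\}$ and $n\in\mathbb N$, there is a unique configuration of pairwise vertex-disjoint (non-intersecting) directed paths connecting the sources $A_m,A_{m+1},\ldots,A_{m+n}$ to the sinks $B_0,B_1,\ldots,B_n$: for each $i\in\{0,\ldots,n\}$, the source $A_{m+i}$ is connected to the sink $B_i$ by the highest possible path, which passes through $(-m,m+ip)$. The weight of this configuration is $\prod_{i=0}^n\prod_{j=1}^{ip+m}V_j$.
   Context: Let $p\ge2$ and let $(V_l)_{l\ge1}$ be formal variables. Consider the directed graph whose vertices are the $(k,l)\in\mathbb Z\times\mathbb N$ with $k+l\equiv0 \pmod p$, whose edges are the rises $(k,l)\to(k+1,l+p-1)$, of weight $1$, and the falls $(k,l)\to(k+1,l-1)$ (for $l\ge1$), of weight $V_l$; the weight of a path is the product of its edge weights and the weight of a configuration of paths is the product of the path weights. For $k\in\mathbb N$ let $q_k=\lfloor k/(p-1)\rfloor$ and $r_k=k-(p-1)q_k$, and set $A_k:=(-k-q_k,r_k)=(-pq_k-r_k,r_k)$ and $B_k:=(kp,0)$. *)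

(* Defs.v *)
From mathcomp Require Import all_boot all_order all_algebra.
Set Implicit Arguments. Unset Strict Implicit. Unset Printing Implicit Defensive.
Import Order.TTheory GRing.Theory Num.Theory.

Definition vtx := (int * nat)%type.

Local Open Scope ring_scope.

Definition is_vertex (p : nat) (v : vtx) : bool :=
  ((v.1 + (v.2)%:Z) %% (p%:Z))%Z == 0.

Definition is_rise (p : nat) (u v : vtx) : bool :=
  (v.1 == u.1 + 1) && (v.2 == (u.2 + p.-1)%N).

Definition is_fall (u v : vtx) : bool :=
  (v.1 == u.1 + 1) && (1 <= u.2)%N && (v.2 == u.2.-1).

Definition edge (p : nat) : rel vtx :=
  fun u v => [&& is_vertex p u, is_vertex p v & is_rise p u v || is_fall u v].

Definition eweight (R : comPzRingType) (V : nat -> R) (p : nat) (u v : vtx) : R :=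
  if is_rise p u v then 1 else V u.2.

(* A path starting at a is encoded by the list s of the vertices after a;
   its vertex list is a :: s. *)
Definition is_path_from_to (p : nat) (a b : vtx) (s : seq vtx) : bool :=
  is_vertex p a && path (edge p) a s && (last a s == b).

Definition pweight (R : comPzRingType) (V : nat -> R) (p : nat) (a : vtx) (s : seq vtx) : R :=
  \prod_(e <- zip (a :: s) s) eweight V p e.1 e.2.

Definition qk (p k : nat) : nat := (k %/ p.-1)%N.
Definition rk (p k : nat) : nat := (k - p.-1 * qk p k)%N.

Definition Asrc (p k : nat) : vtx := (- ((k + qk p k)%N)%:Z, rk p k).
Definition Bsnk (p k : nat) : vtx := ((k * p)%N%:Z, 0%N).

Definition nonint_config (p m n : nat) (P : 'I_n.+1 -> seq vtx) : Prop :=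
  (forall i : 'I_n.+1, exists j : 'I_n.+1,
      is_path_from_to p (Asrc p (m + i)) (Bsnk p j) (P i)) /\
  (forall i i' : 'I_n.+1, i != i' ->
      last (Asrc p (m + i)) (P i) != last (Asrc p (m + i')) (P i')) /\
  (forall i i' : 'I_n.+1, i != i' ->
      forall v, v \in Asrc p (m + i) :: P i -> v \notin Asrc p (m + i') :: P i').

(* s is the highest path from a to b: every path from a to b lies weakly below
   it (paths advance the first coordinate by 1 at each step, so the j-th vertices
   of two paths from a have the same first coordinate). *)
Definition highest_path (p : nat) (a b : vtx) (s : seq vtx) : Prop :=
  is_path_from_to p a b s /\
  forall t, is_path_from_to p a b t ->
    forall j, ((nth a (a :: t) j).2 <= (nth a (a :: s) j).2)%N.

Arguments nonint_config : clear implicits.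
Arguments highest_path : clear implicits.
Arguments is_path_from_to : clear implicits.

(* Main.v *)
Require Import Defs.
From mathcomp Require Import all_boot all_order all_algebra zify.
Import GRing.Theory Num.Theory.
Local Open Scope ring_scope.

Lemma edge_step p u v : edge p u v ->
  [/\ v.1 = u.1 + 1, (v.2 <= u.2 + p.-1)%N, (u.2 <= v.2 + 1)%N
    & u.1 + (u.2)%:Z <= v.1 + (v.2)%:Z].
Proof.
case/and3P => _ _ /orP [/andP [/eqP -> /eqP ->] | /andP [/andP [/eqP -> h1] /eqP ->]];
  split; lia.
Qed.

Lemma seg p a s j d : path (edge p) a s -> (j + d <= size s)%N ->
  let u := nth a (a::s) j in let w := nth a (a::s) (j+d) in
  [/\ w.1 = u.1 + d%:Z, (w.2 <= u.2 + d * p.-1)%N, (u.2 <= w.2 + d)%N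
    & u.1 + (u.2)%:Z <= w.1 + (w.2)%:Z].
Proof.
move=> /(pathP a) H; elim: d => [|d IH] hd /=.
  rewrite addn0; split; lia.
have [|e1 e2 e3 e4] := IH; first lia.
have := H (j + d)%N; rewrite -/(nth a (a :: s) (j + d).+1) -addnS.
case/(_ _)/edge_step; first lia.
move=> f1 f2 f3 f4; rewrite mulSn addnS /=; split; lia.
Qed.

Lemma nth_vertex p a s j : is_vertex p a -> path (edge p) a s -> (j <= size s)%N ->
  is_vertex p (nth a (a::s) j).
Proof.
move=> ha /(pathP a) H; case: j => [|j] // hj.
by case/and3P: (H j hj).
Qed.


Lemma pweightE (R : comPzRingType) (V : nat -> R) p a s :
  pweight V p a s = \prod_(0 <= j < size s) eweight V p (nth a (a::s) j) (nth a s j).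
Proof.
rewrite /pweight (big_nth (a, a)) size_zip /= (minn_idPr (leqnSn _)).
apply: eq_big_nat => j hj; rewrite nth_zip_cond size_zip /= (minn_idPr (leqnSn _)).
by case/andP: hj => _ ->.
Qed.

Lemma qr_eq p k : k = (rk p k + qk p k * p.-1)%N.
Proof. rewrite /rk /qk; have := leq_divM k p.-1; lia. Qed.

Lemma prod_rev (R : comPzRingType) (V : nat -> R) H :
  \prod_(0 <= j < H) V (H - j)%N = \prod_(1 <= j < H.+1) V j.
Proof.
elim: H => [|H IH]; first by rewrite !big_geq.
rewrite big_nat_recl // subn0 big_nat_recr //= mulrC; congr (_ * _).
rewrite -IH; apply: eq_big_nat => j _; by rewrite subSS.
Qed.

Section Constr.
Variables (p' m : nat).
Local Notation p := p'.+2.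
Definition TT i := (i + qk p (m+i))%N.
Definition HH i := (m + i * p)%N.
Definition LL i := (TT i + HH i)%N.
Definition fv i j : vtx := ((Asrc p (m+i)).1 + (j%:Z),
  if (j <= TT i)%N then (rk p (m+i) + j * p.-1)%N else (HH i - (j - TT i))%N).
Definition Pc i := mkseq (fun j => fv i j.+1) (LL i).

Lemma key i : (rk p (m+i) + TT i * p.-1)%N = HH i.
Proof. have := qr_eq p (m+i); rewrite /TT /HH /=; lia. Qed.

Lemma fv0 i : fv i 0 = Asrc p (m+i).
Proof. by rewrite /fv leq0n addr0 mul0n addn0. Qed.

Lemma nthPc i j : (j <= LL i)%N -> nth (Asrc p (m+i)) (Asrc p (m+i) :: Pc i) j = fv i j.
Proof.
case: j => [|j] hj; first by rewrite fv0.
by rewrite /= nth_mkseq.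
Qed.

Lemma size_Pc i : size (Pc i) = LL i.
Proof. by rewrite size_mkseq. Qed.

Lemma fv_low i j : (j <= TT i)%N ->
  fv i j = ((Asrc p (m+i)).1 + j%:Z, (rk p (m+i) + j * p.-1)%N).
Proof. by rewrite /fv => ->. Qed.

Lemma fv_high i j : (TT i <= j)%N ->
  fv i j = ((Asrc p (m+i)).1 + j%:Z, (HH i - (j - TT i))%N).
Proof.
move=> h2; rewrite /fv; case: (leqP j (TT i)) => // h1.
have -> : j = TT i by lia.
by rewrite subnn subn0 key.
Qed.

Lemma fvT i : fv i (TT i) = ((- (m%:Z))%R, (m + i * p)%N).
Proof.
rewrite fv_low // key /Asrc /TT /=; congr pair; lia.
Qed.

Lemma fv_vertex i j : (j <= LL i)%N -> is_vertex p (fv i j).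
Proof.
move=> hj; rewrite /is_vertex; apply/eqP.
have hq := qr_eq p (m+i); have hk := key i.
case: (leqP j (TT i)) => hT.
  rewrite fv_low //.
  rewrite (_ : _ + _ = (j%:Z - (qk p'.+2 (m+i))%:Z) * (p'.+2)%:Z) ?modzMl //.
  rewrite /Asrc /= in hq *; lia.
rewrite fv_high; last lia.
rewrite (_ : _ + _ = (i%:Z) * (p'.+2)%:Z) ?modzMl //.
rewrite /LL /TT /HH /Asrc /= in hT hj *; lia.
Qed.


Local Notation A i := (Asrc p (m+i)).

Lemma fv_edge i j : (j < LL i)%N -> edge p (fv i j) (fv i j.+1).
Proof.
move=> hj; apply/and3P; split; try by apply: fv_vertex; lia.
have hk := key i.
case: (ltnP j (TT i)) => hT.
  rewrite !fv_low //; last lia.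
  apply/orP; left; rewrite /is_rise /=; apply/andP; split; apply/eqP; lia.
rewrite !fv_high //; last lia.
apply/orP; right; rewrite /is_fall /=; rewrite /LL in hj.
apply/andP; split; [apply/andP; split; [apply/eqP|]|apply/eqP]; lia.
Qed.

Lemma Pc_path i : path (edge p) (A i) (Pc i).
Proof.
apply/(pathP (A i)) => j; rewrite size_Pc => hj.
rewrite nthPc; last lia.
by rewrite nth_mkseq //; apply: fv_edge.
Qed.

Lemma Pc_last i : last (A i) (Pc i) = Bsnk p i.
Proof.
rewrite (last_nth (A i)) size_Pc nthPc // fv_high; last by rewrite /LL; lia.
rewrite /Bsnk /Asrc /LL /TT /HH /=; congr pair; lia.
Qed.

Lemma Pc_mem i v : v \in A i :: Pc i -> exists2 j, (j <= LL i)%N & v = fv i j.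
Proof.
case/(nthP (A i)) => j hj <-; exists j; first by rewrite /= size_Pc in hj; lia.
by rewrite nthPc //; rewrite /= size_Pc in hj; lia.
Qed.

Lemma fv_inv {i j} : (j <= LL i)%N ->
  [/\ (TT i <= j)%N, (fv i j).1 = - (m%:Z) + (j - TT i)%N%:Z & (fv i j).1 + ((fv i j).2)%:Z = (i * p)%N%:Z] \/
  [/\ (j < TT i)%N, (fv i j).1 = - (m%:Z) - (TT i - j)%N%:Z &
      ((fv i j).2 + (TT i - j) * p.-1 = m + i * p)%N].
Proof.
move=> hj; have hk := key i.
case: (ltnP j (TT i)) => hT.
  right; rewrite fv_low /=; last lia.
  split=> //.
    by rewrite /Asrc /TT /=; rewrite /TT in hT; lia.
  by rewrite -addnA -mulnDl subnKC ?(ltnW hT) // hk.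
left; split=> //; rewrite fv_high //=;
rewrite /Asrc /LL /TT /HH /= in hj hT *; lia.
Qed.

Lemma fv_inj i i' j j' : (j <= LL i)%N -> (j' <= LL i')%N -> fv i j = fv i' j' -> i = i'.
Proof.
move=> hj hj' e.
suff : (i * p = i' * p)%N by move/eqP; rewrite eqn_pmul2r // => /eqP.
have e1 : (fv i j).1 = (fv i' j').1 by rewrite e.
have e2 : (fv i j).2 = (fv i' j').2 by rewrite e.
case: (fv_inv (i:=i) hj) => [[h1 h2 h4]|[h1 h2 h3]]; case: (fv_inv (i:=i') hj') => [[h1' h2' h4']|[h1' h2' h3']].
- lia.
- lia.
- lia.
- have ee : (TT i - j = TT i' - j')%N by lia.
  rewrite ee e2 in h3; lia.
Qed.

Lemma Pc_weight (R : comPzRingType) (V : nat -> R) i :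
  pweight V p (A i) (Pc i) = \prod_(1 <= j < (i * p + m).+1) V j.
Proof.
rewrite pweightE size_Pc.
rewrite (eq_big_nat _ _ (F2 := fun j => eweight V p (fv i j) (fv i j.+1))); last first.
  move=> j hj; rewrite nthPc ?nth_mkseq //; lia.
rewrite (big_cat_nat _ (n := TT i)) //=; last by rewrite /LL; lia.
rewrite big1_seq ?mul1r; last first.
  move=> j; rewrite mem_index_iota => hj.
  have hk := key i.
  rewrite /eweight !fv_low /is_rise /=; try lia.
  by case: ifP => // /negP []; apply/andP; split; apply/eqP; lia.
rewrite (eq_big_nat _ _ (F2 := fun j => V (HH i - (j - TT i))%N)); last first.
  move=> j hj; have hk := key i.
  rewrite /eweight !fv_high /is_rise /=; try lia.
  rewrite /LL in hj.
  case: ifP => // /andP [_ /eqP]; lia.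
rewrite -{1}(add0n (TT i)) big_addn /LL addKn.
rewrite (eq_big_nat _ _ (F2 := fun j => V (HH i - j)%N)); last first.
  by move=> j _; rewrite addnK.
by rewrite prod_rev /HH addnC.
Qed.

Lemma Pc_highest i : highest_path p (A i) (Bsnk p i) (Pc i).
Proof.
split.
  rewrite /is_path_from_to Pc_path Pc_last eqxx !andbT.
  rewrite -(fv0 i); exact: fv_vertex.
move=> t; rewrite /is_path_from_to => /andP [/andP [_ ht] /eqP hl].
have hs : size t = LL i.
  have := @seg p (A i) t 0 (size t) ht (leqnn _); rewrite add0n /= -(last_nth (A i)) hl.
  case=> h1 _ _ _; rewrite /Bsnk /Asrc /LL /TT /HH /= in h1 *; lia.
move=> j; case: (leqP j (LL i)) => hj; last first.
  by rewrite !nth_default //= ?size_Pc ?hs.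
rewrite nthPc //; have hk := key i.
case: (leqP j (TT i)) => hT.
  rewrite fv_low //=.
  have := @seg p (A i) t 0 j ht; rewrite hs /= add0n => /(_ hj) [_ h2 _ _]; lia.
rewrite fv_high /=; last lia.
have := @seg p (A i) t j (LL i - j) ht; rewrite hs subnKC // => /(_ (leqnn _)).
rewrite -hs -(last_nth (A i)) hl /= => [[_ _ h3 _]].
rewrite /LL in h3 hj hs; lia.
Qed.

Lemma pair_ext (a b : vtx) : a.1 = b.1 -> a.2 = b.2 -> a = b.
Proof. by case: a b => [? ?] [? ?] /= -> ->. Qed.

Lemma size_path {i jj s} : is_path_from_to p (A i) (Bsnk p jj) s ->
  size s = (jj * p + (m + i + qk p (m+i)))%N.
Proof.
rewrite /is_path_from_to => /andP [/andP [_ ht] /eqP hl].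
have := @seg p (A i) s 0 (size s) ht (leqnn _).
rewrite add0n /= -(last_nth (A i)) hl => [[h1 _ _ _]].
rewrite /Bsnk /Asrc /= in h1; lia.
Qed.

Lemma cross i jj s : (m <= p.-1)%N -> is_path_from_to p (A i) (Bsnk p jj) s ->
  (TT i <= size s)%N /\
  exists2 t, (t <= i)%N & nth (A i) (A i :: s) (TT i) = (- (m%:Z), (m + t * p)%N).
Proof.
move=> hm hP; have hs := size_path hP.
have hT : (TT i <= size s)%N by rewrite hs /TT; lia.
split=> //.
move: hP; rewrite /is_path_from_to => /andP [/andP [hv ht] _].
have := @seg p (A i) s 0 (TT i) ht hT; rewrite add0n /= => [[h1 h2 _ _]].
have := @nth_vertex p (A i) s (TT i) hv ht hT; rewrite /is_vertex => /eqP hmod.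
set w := nth _ _ (TT i) in h1 h2 hmod *.
have hc := divz_eq (w.1 + (w.2)%:Z) (p%:Z); rewrite hmod addr0 in hc.
move: hc; set c := (_ %/ _)%Z => hc.
have hk := key i.
have hw1 : w.1 = - (m%:Z) by rewrite h1 /Asrc /TT /=; lia.
have hc0 : 0 <= c by nia.
have hci : c <= i%:Z by rewrite /HH in hk; nia.
have [t ht'] : exists t : nat, c = t%:Z by case: (c) hc0 => [t|t] // _; exists t.
exists t; first by lia.
apply: pair_ext => //=.
rewrite ht' in hc; nia.
Qed.

Lemma forced i s : is_path_from_to p (A i) (Bsnk p i) s ->
  nth (A i) (A i :: s) (TT i) = (- (m%:Z), (m + i * p)%N) -> s = Pc i.
Proof.
move=> hP hw; have hs := size_path hP.
have hL : size s = LL i by rewrite hs /LL /TT /HH; lia.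
move: hP; rewrite /is_path_from_to => /andP [/andP [hv ht] /eqP hl].
have hk := key i.
have hlast : nth (A i) (A i :: s) (LL i) = Bsnk p i by rewrite -hL -last_nth.
have claim : forall j, (j <= LL i)%N -> nth (A i) (A i :: s) j = fv i j.
  move=> j hj.
  have := @seg p (A i) s 0 j ht; rewrite hL add0n => /(_ hj) [e1 e2 _ _].
  case: (leqP j (TT i)) => hT.
    rewrite fv_low //; apply: pair_ext => //=.
    have := @seg p (A i) s j (TT i - j) ht; rewrite hL subnKC //.
    move=> /(_ ltac:(rewrite /LL; lia)); rewrite hw /= => [[_ _ f3 _]].
    have := @seg p (A i) s j (TT i - j) ht; rewrite hL subnKC //.
    move=> /(_ ltac:(rewrite /LL; lia)); rewrite hw /= => [[_ f2 _ _]].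
    have em : ((TT i - j) * p.-1 + j * p.-1 = TT i * p.-1)%N by rewrite -mulnDl subnK.
    have e2' : ((nth (A i) (A i :: s) j).2 <= rk p (m+i) + j * p.-1)%N := e2.
    rewrite /HH in hk; lia.
  rewrite fv_high; last lia.
  apply: pair_ext => //=.
  have := @seg p (A i) s (TT i) (j - TT i) ht; rewrite hL subnKC; last lia.
  move=> /(_ hj); rewrite hw /= => [[_ _ _ f4]].
  have := @seg p (A i) s j (LL i - j) ht; rewrite hL subnKC //.
  move=> /(_ (leqnn _)); rewrite hlast /= => [[_ _ _ g4]].
  rewrite /LL /TT /HH /Asrc /= in f4 g4 e1 hj hT *; lia.
apply: (@eq_from_nth _ (A i)); first by rewrite hL size_Pc.
move=> j hj; rewrite hL in hj.
rewrite nth_mkseq // -(claim j.+1) //.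
Qed.

Lemma sink_ge i jj s : is_path_from_to p (A i) (Bsnk p jj) s ->
  nth (A i) (A i :: s) (TT i) = (- (m%:Z), (m + i * p)%N) -> (i <= jj)%N.
Proof.
move=> hP hw; have hs := size_path hP.
move: hP; rewrite /is_path_from_to => /andP [/andP [hv ht] /eqP hl].
have := @seg p (A i) s (TT i) (size s - TT i) ht; rewrite subnKC; last by rewrite hs /TT; lia.
move=> /(_ (leqnn _)); rewrite -(last_nth (A i)) hl hw /= => [[_ _ _ h4]].
rewrite -(@leq_pmul2r p) //. move: h4; rewrite addr0 PoszD addrA addNr add0r lez_nat. done.
Qed.

End Constr.

Theorem proposition2 (R : comPzRingType) (V : nat -> R) (p m n : nat) :
  (2 <= p)%N -> (m <= p.-1)%N ->
  exists P : 'I_n.+1 -> seq vtx,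
    nonint_config p m n P /\
    (forall P' : 'I_n.+1 -> seq vtx, nonint_config p m n P' -> forall i, P' i = P i) /\
    (forall i : 'I_n.+1,
       highest_path p (Asrc p (m + i)) (Bsnk p i) (P i) /\
       ((- (m%:Z))%R, (m + i * p)%N) \in Asrc p (m + i) :: P i) /\
    \prod_(i < n.+1) pweight V p (Asrc p (m + i)) (P i)
      = \prod_(i < n.+1) \prod_(1 <= j < (i * p + m).+1) V j.
Proof.
case: p => [|[|p']] // _ hm.
exists (fun i : 'I_n.+1 => Pc p' m i).
have hB : forall i i' : nat, Bsnk p'.+2 i = Bsnk p'.+2 i' -> i = i'.
  move=> i i' [] e; apply/eqP; rewrite -(@eqn_pmul2r p'.+2) //; apply/eqP; lia.
split; [|split; [|split]].
- split; [|split].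
  + by move=> i; exists i; case: (Pc_highest p' m i).
  + move=> i i' hii; rewrite !Pc_last; apply/eqP => /hB /val_inj e.
    by rewrite e eqxx in hii.
  + move=> i i' hii v /Pc_mem [j hj ->]; apply/negP => /Pc_mem [j' hj' e].
    by move: (fv_inj p' m _ _ _ _ hj hj' e) => /val_inj e'; rewrite e' eqxx in hii.
- move=> P' [hpath [hlast hdisj]].
  have Q : forall i (hi : (i < n.+1)%N),
      nth (Asrc p'.+2 (m + i)) (Asrc p'.+2 (m + i) :: P' (Ordinal hi)) (TT p' m i)
        = (- (m%:Z), (m + i * p'.+2)%N).
    elim/ltn_ind => i IH hi.
    have [jj hjj] := hpath (Ordinal hi).
    have [hT [t ht hw]] := cross p' m i jj (P' (Ordinal hi)) hm hjj.
    have [hti|hti] : (t < i)%N \/ t = i by lia.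
      have hto : (t < n.+1)%N by lia.
      have := IH t hti hto; rewrite -hw => hw'.
      have hne : Ordinal hto != Ordinal hi by rewrite -val_eqE /= neq_ltn hti.
      have := hdisj _ _ hne (nth (Asrc p'.+2 (m + t)) (Asrc p'.+2 (m + t) :: P' (Ordinal hto)) (TT p' m t)).
      have [jt hjt] := hpath (Ordinal hto).
      have [hT' _] := cross p' m t jt _ hm hjt.
      rewrite mem_nth /=; last exact: hT'.
      move=> /(_ isT); rewrite hw' mem_nth //; exact: hT.
    by rewrite hw hti.
  have Q' : forall d i (hi : (i < n.+1)%N), (n - i)%N = d ->
      last (Asrc p'.+2 (m + i)) (P' (Ordinal hi)) = Bsnk p'.+2 i.
    elim/ltn_ind => d IH i hi hd.
    have [jj hjj] := hpath (Ordinal hi).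
    have hge := sink_ge p' m i jj _ hjj (Q i hi).
    move: (hjj); rewrite /is_path_from_to => /andP [_ /eqP hl].
    have [hlt|heq] : (i < jj)%N \/ i = jj by lia.
      have hne : jj != Ordinal hi by rewrite -val_eqE /= eq_sym neq_ltn hlt.
      have hjl := IH (n - jj)%N ltac:(have := ltn_ord jj; lia) jj (ltn_ord jj) erefl.
      rewrite (_ : Ordinal (ltn_ord jj) = jj) in hjl; last by apply: val_inj.
      by have := hlast _ _ hne; rewrite hl hjl eqxx.
    by rewrite hl heq.
  move=> i.
  have e : Ordinal (ltn_ord i) = i by apply: val_inj.
  have hQ := Q i (ltn_ord i); rewrite e in hQ.
  have hQ' := Q' _ i (ltn_ord i) erefl; rewrite e in hQ'.
  have [jj hjj] := hpath i.
  have ejj : jj = i.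
    apply: val_inj; apply: hB.
    move: (hjj); rewrite /is_path_from_to => /andP [_ /eqP hl].
    by rewrite -hl hQ'.
  rewrite ejj in hjj.
  exact: forced hjj hQ.
- move=> i; split; first exact: Pc_highest.
  rewrite -(fvT p' m i) -(nthPc p' m i (TT p' m i)); last by rewrite /LL; lia.
  apply: mem_nth; rewrite /= size_Pc /LL; lia.
- by apply: eq_bigr => i _; rewrite Pc_weight.
Qed.
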